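(* Let $\mathtt{X}a<_r\mathtt{Y}b<_r\mathtt{Z}c$ be three completing operations in a run $r$ of a linearizable atomic register protocol $P$, where $\mathtt{X}a$ is an $a$-operation, $\mathtt{Y}b$ a $b$-operation and $\mathtt{Z}c$ a $c$-operation. If $a\neq b$, then $a\neq c$.
   Context: Asynchronous message-passing model: $n$ processes, FIFO channels, discrete time $0,1,2,\dots$; an adversarial environment nondeterministically schedules process moves, message deliveries and operation invocations. An operation $\mathtt{X}$ at process $i$ begins with an invocation input from the environment at some time and ends when $i$ performs a matching response at a later time; it completes in $r$ if both occur. $\mathtt{X}<_r\mathtt{Y}$ iff $\mathtt{X}$'s response time is strictly smaller than $\mathtt{Y}$'s invocation time. Registers: a multi-writer multi-reader register with writes (invocation carries value $v$) and reads (response returns a value); default initial value $\bot$. Each value is written at most once in any run; $\mathtt{W}(v)$ denotes the write of $v$. A $v$-operation $\mathtt{X}v$ is a read returning $v$ or the write of $v$. A sequential history is an alternating sequence of invocations and matching responses; an atomic register history is one in which every read returns the most recently written value (or $\bot$ if none). A linearization of $r$ is an atomic register history $H$ consisting of the invocations and responses of all completed operations of $r$, possibly some invocations of pending operations together with matching responses, such that if $\mathtt{X}<_r\mathtt{Y}$ and $\mathtt{Y}$'s invocation is in $H$ then $\mathtt{X}$'s response precedes $\mathtt{Y}$'s invocation in $H$. $P$ is a linearizable atomic register protocol if in every run of $P$ every operation invoked at a nonfaulty process completes and a linearization of the run exists. *)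

(* Defs.v *)
From mathcomp Require Import all_boot.
Set Implicit Arguments. Unset Strict Implicit. Unset Printing Implicit Defensive.

(* Register values: [Val] is the type of writable values; a "value" returned
   by a read is an [option Val], with [None] standing for the default
   initial value bottom (which is never written). *)

Inductive opkind (Val : Type) :=
  | ReadOp
  | WriteOp of Val.
Arguments ReadOp {Val}.

(* The register-level view of a run of a protocol with [n] processes in the
   asynchronous message-passing model.  Each operation has a process, a kind
   (read, or write of v), an invocation time, and possibly a response
   (time, returned value; the returned value of a write is irrelevant).
   [faulty i] says that process i is faulty in the run. *)
Record run (Val : Type) (n : nat) := Run {
  rop : Type;
  op_proc : rop -> 'I_n;
  op_kind : rop -> opkind Val;
  op_inv : rop -> nat;
  op_resp : rop -> option (nat * option Val);
  faulty : 'I_n -> bool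
}.

Section Defs.
Variables (Val : Type) (n : nat).
Implicit Types (r : run Val n).

Definition wf_run r : Prop :=
  (forall (o : rop r) t v, op_resp o = Some (t, v) -> op_inv o < t) /\
  (forall (o1 o2 : rop r) (v : Val),
      op_kind o1 = WriteOp v -> op_kind o2 = WriteOp v -> o1 = o2).

Definition completes r (X : rop r) : Prop := exists p, op_resp X = Some p.

Definition precedes r (X Y : rop r) : Prop :=
  exists t v, op_resp X = Some (t, v) /\ t < op_inv Y.

Definition is_vop r (X : rop r) (v : option Val) : Prop :=
  (op_kind X = ReadOp /\ exists t, op_resp X = Some (t, v)) \/
  (exists w, op_kind X = WriteOp w /\ v = Some w).

(* A linearization of r, presented as a sequential history: [pos o = Some k]
   means o appears (as an invocation immediately followed by its matching
   response) at position k of the sequential history, [None] means o is not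
   in it; [hret o] is the value returned by o's response in H (for reads). *)
Definition linearization r (pos : rop r -> option nat)
    (hret : rop r -> option Val) : Prop :=
  (forall o1 o2 k, pos o1 = Some k -> pos o2 = Some k -> o1 = o2) /\
  (forall o t v, op_resp o = Some (t, v) ->
       (exists k, pos o = Some k) /\
       (op_kind o = ReadOp -> hret o = v)) /\
  (forall X Y kY, precedes X Y -> pos Y = Some kY ->
       exists kX, pos X = Some kX /\ kX < kY) /\
  (forall R kR, op_kind R = ReadOp -> pos R = Some kR ->
     ((hret R = None /\
       forall W w kW, op_kind W = WriteOp w -> pos W = Some kW -> ~ kW < kR)
      \/
      (exists W w kW, op_kind W = WriteOp w /\ pos W = Some kW /\ kW < kR /\
         hret R = Some w /\
         forall W' w' kW', op_kind W' = WriteOp w' -> pos W' = Some kW' ->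
           ~ (kW < kW' /\ kW' < kR)))).

(* A protocol is identified with its set of runs. *)
Definition linearizable_protocol (P : run Val n -> Prop) : Prop :=
  forall r, P r ->
    (forall o : rop r, ~~ faulty r (op_proc o) -> completes o) /\
    exists pos hret, @linearization r pos hret.

End Defs.

(* Main.v *)
Require Import Defs.
From mathcomp Require Import all_boot.
From mathcomp Require Import zify.
Set Implicit Arguments. Unset Strict Implicit.

Section H.
Variables (Val : Type) (n : nat) (r : run Val n) (pos : rop r -> option nat).

Definition lastw (k : nat) (m : option Val) : Prop :=
 (m = None /\ forall (W : rop r) w kW, op_kind W = WriteOp w -> pos W = Some kW -> ~ (kW <= k)) \/
 (exists (W : rop r) w kW, op_kind W = WriteOp w /\ pos W = Some kW /\ kW <= k /\ m = Some w /\
    forall (W' : rop r) w' kW', op_kind W' = WriteOp w' -> pos W' = Some kW' -> ~ (kW < kW' /\ kW' <= k)).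

Hypothesis Hdist : forall o1 o2 k, pos o1 = Some k -> pos o2 = Some k -> o1 = o2.

Lemma lw_none k1 k2 m1 : k1 <= k2 -> lastw k2 None -> lastw k1 m1 -> m1 = None.
Proof.
move=> hk [[_ H2]|[W [w [kW [_ [_ [_ [E _]]]]]]]]; last by [].
case=> [[->]|[W [w [kW [HW [PW [Hk _]]]]]]] //.
exfalso; apply: (H2 W w kW HW PW); lia.
Qed.

Lemma lw_same k1 k2 m1 (W : rop r) w kW :
  op_kind W = WriteOp w -> pos W = Some kW -> kW <= k1 -> k1 <= k2 ->
  (forall (W' : rop r) w' kW', op_kind W' = WriteOp w' -> pos W' = Some kW' -> ~ (kW < kW' /\ kW' <= k2)) ->
  lastw k1 m1 -> m1 = Some w.
Proof.
move=> HW PW h1 h2 Hno [[_ H1]|[W1 [w1 [kW1 [HW1 [PW1 [Hk1 [-> Hno1]]]]]]]].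
  by exfalso; apply: (H1 W w kW HW PW).
have [lt|eq|gt] := ltngtP kW kW1.
- by exfalso; apply: (Hno W1 w1 kW1 HW1 PW1); lia.
- by exfalso; apply: (Hno1 W w kW HW PW); lia.
- subst kW1. have E := Hdist PW PW1. subst W1. rewrite HW in HW1. by case: HW1 => ->.
Qed.
End H.

Theorem lemma16 (Val : Type) (n : nat) (P : run Val n -> Prop)
    (HP : linearizable_protocol P) (r : run Val n) (Hr : P r)
    (Hwf : wf_run r)
    (X Y Z : rop r) (a b c : option Val)
    (HXc : completes X) (HYc : completes Y) (HZc : completes Z)
    (HX : is_vop X a) (HY : is_vop Y b) (HZ : is_vop Z c)
    (HXY : precedes X Y) (HYZ : precedes Y Z) :
  a <> b -> a <> c.
Proof.
move=> Hab Hac; subst c.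
have [_ [pos [hret [Hd [Hc [Hrt Hat]]]]]] := HP r Hr.
have vop : forall (O : rop r) v, completes O -> is_vop O v ->
    exists k, pos O = Some k /\ lastw pos k v.
  move=> O v [[t v'] Ht] [[HR [t' Ht']]|[w [HW ->]]].
    have [[k Pk] Hret] := Hc _ _ _ Ht'.
    exists k; split=> //.
    have hr := Hret HR.
    have notk : forall W w, op_kind W = WriteOp w -> pos W = Some k -> False.
      move=> W w HW PW; have E := Hd _ _ _ PW Pk; subst W; by rewrite HR in HW.
    case: (Hat O k HR Pk) => [[Hn Hno]|[W [w [kW [HW [PW [lt [Hs Hno]]]]]]]].
      left; split; first by rewrite -hr.
      move=> W w kW HW PW le; have [lt|eq] : kW < k \/ kW = k by lia.
        exact: (Hno W w kW HW PW lt).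
      by subst kW; exact: (notk W w HW PW).
    right; exists W, w, kW; do 3 (split; first by [] || lia).
    split; first by rewrite -hr.
    move=> W' w' kW' HW' PW' [l1 l2]; have [lt'|eq] : kW' < k \/ kW' = k by lia.
      exact: (Hno W' w' kW' HW' PW').
    by subst kW'; exact: (notk W' w' HW' PW').
  have [[k Pk] _] := Hc _ _ _ Ht.
  exists k; split=> //; right; exists O, w, k; do 4 (split=> //).
  move=> W' w' kW' _ _; lia.
have [kX [PX LX]] := vop X a HXc HX.
have [kY [PY LY]] := vop Y b HYc HY.
have [kZ [PZ LZ]] := vop Z a HZc HZ.
have [kX' [PX' lXY]] := Hrt _ _ _ HXY PY.
have [kY' [PY' lYZ]] := Hrt _ _ _ HYZ PZ.
rewrite PX in PX'; case: PX' => ?; subst kX'.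
rewrite PY in PY'; case: PY' => ?; subst kY'.
case: (LZ) => [[Ha Hno]|[W [w [kW [HW [PW [le [Ha Hno]]]]]]]].
  apply: Hab; rewrite Ha; symmetry; rewrite Ha in LZ.
  have hk : kY <= kZ by lia.

  exact: (lw_none hk LZ LY).
have [le'|gt] := leqP kW kX.
  apply: Hab; rewrite (lw_same Hd HW PW le' (k2:=kZ) _ Hno LX); last by lia.
  by rewrite (lw_same Hd HW PW (k1:=kY) _ (k2:=kZ) _ Hno LY) //; lia.
case: LX => [[Ha' _]|[W1 [w1 [kW1 [HW1 [PW1 [le1 [Ha1 _]]]]]]]].
  by rewrite Ha' in Ha.
rewrite Ha in Ha1; case: Ha1 => ?; subst w1.
have E := (proj2 Hwf) _ _ _ HW HW1; subst W1.
rewrite PW in PW1; case: PW1 => ?; subst kW1; lia.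
Qed.
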